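(* Let $\mathcal{D}=\mathcal{P}_{\mathcal{D}}\cup\mathcal{L}_{\mathcal{D}}$ be a minimal dominating set of the incidence graph of an arbitrary projective plane $\Pi_q$ of order $q$ with $|\mathcal{D}|<3q-1$. Suppose there is a point $P$ such that $|[P]\cap\mathcal{L}_{\mathcal{D}}|=q$, and let $\ell$ be the unique line of $[P]\setminus\mathcal{L}_{\mathcal{D}}$. Then $\mathcal{L}_{\mathcal{D}}=[P]\setminus\{\ell\}$ and $\mathcal{P}_{\mathcal{D}}$ is the set of points of $\ell$ other than $P$; hence $|\mathcal{D}|=2q$ and $\mathcal{D}$ is stable.
   Context: A dominating set $\mathcal{D}=\mathcal{P}_{\mathcal{D}}\cup\mathcal{L}_{\mathcal{D}}$ of the incidence graph of $\Pi_q$ is a set of points $\mathcal{P}_{\mathcal{D}}$ and lines $\mathcal{L}_{\mathcal{D}}$ such that every point not in $\mathcal{P}_{\mathcal{D}}$ lies on a line of $\mathcal{L}_{\mathcal{D}}$ and every line not in $\mathcal{L}_{\mathcal{D}}$ contains a point of $\mathcal{P}_{\mathcal{D}}$; minimal means no proper subset is dominating. $\mathcal{D}$ is stable if it is minimal and there is no dominating set $\mathcal{D}'\supset\mathcal{D}$ with $|\mathcal{D}'|=|\mathcal{D}|+1$ that contains a dominating set of size less than $|\mathcal{D}|$. $[P]$ is the set of lines through the point $P$. *)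

(* Defs.v *)
From mathcomp Require Import all_boot.
Set Implicit Arguments. Unset Strict Implicit. Unset Printing Implicit Defensive.

Definition projective_plane (Pt Ln : finType) (I : Pt -> Ln -> bool) (q : nat) : Prop :=
  (forall p1 p2 : Pt, p1 != p2 -> #|[set l | I p1 l && I p2 l]| = 1) /\
  (forall l1 l2 : Ln, l1 != l2 -> #|[set p | I p l1 && I p l2]| = 1) /\
  (exists a b c d : Pt, uniq [:: a; b; c; d] /\
     forall l : Ln, (I a l + I b l + I c l + I d l <= 2)%N) /\
  (forall l : Ln, #|[set p | I p l]| = q.+1).

(* Vertices of the incidence graph: points (inl) and lines (inr). *)
Definition inc_adj (Pt Ln : finType) (I : Pt -> Ln -> bool) (x y : Pt + Ln) : bool :=
  match x, y with
  | inl p, inr l => I p l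
  | inr l, inl p => I p l
  | _, _ => false
  end.

Definition dominating (Pt Ln : finType) (I : Pt -> Ln -> bool) (D : {set Pt + Ln}) : Prop :=
  forall v : Pt + Ln, v \notin D -> exists2 u, u \in D & inc_adj I u v.

Definition minimal_dominating (Pt Ln : finType) (I : Pt -> Ln -> bool) (D : {set Pt + Ln}) : Prop :=
  dominating I D /\ forall D' : {set Pt + Ln}, D' \proper D -> ~ dominating I D'.

Definition stable_dominating (Pt Ln : finType) (I : Pt -> Ln -> bool) (D : {set Pt + Ln}) : Prop :=
  minimal_dominating I D /\
  ~ (exists D' : {set Pt + Ln},
       [/\ D \subset D', #|D'| = #|D|.+1, dominating I D' &
           exists D'' : {set Pt + Ln},
             [/\ D'' \subset D', dominating I D'' & #|D''| < #|D| ]]).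

Definition pts_of (Pt Ln : finType) (D : {set Pt + Ln}) : {set Pt} := [set p | inl p \in D].
Definition lns_of (Pt Ln : finType) (D : {set Pt + Ln}) : {set Ln} := [set l | inr l \in D].
Definition pencil (Pt Ln : finType) (I : Pt -> Ln -> bool) (P : Pt) : {set Ln} := [set l | I P l].

(* Main.v *)
Require Import Defs.
From mathcomp Require Import all_boot zify.
Set Implicit Arguments. Unset Strict Implicit. Unset Printing Implicit Defensive.

Lemma inj_rel (T U : finType) (S : {set T}) (V : {set U}) (R : T -> U -> bool) :
  (forall x, x \in S -> exists2 y, y \in V & R x y) ->
  (forall x x' y, x \in S -> x' \in S -> y \in V -> R x y -> R x' y -> x = x') ->
  #|S| <= #|V|.
Proof.
move=> Hex Hinj.
pose f x := [pick y in V | R x y].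
have fS : forall x, x \in S -> exists2 y, f x = Some y & (y \in V) && R x y.
  move=> x xS; rewrite /f; case: pickP => [y Hy|H0]; first by exists y.
  by case: (Hex x xS) => y yV Ry; move: (H0 y); rewrite yV Ry.
have <- : #|f @: S| = #|S|.
  apply: card_in_imset => x x' xS x'S E.
  case: (fS x xS) => y Ey /andP[yV Ry]; case: (fS x' x'S) => y' Ey' /andP[_ Ry'].
  rewrite Ey Ey' in E; case: E => E; subst y'.
  exact: Hinj Ry Ry'.
rewrite -(card_imset (mem V) (@Some_inj _)).
apply: subset_leq_card; apply/subsetP => z /imsetP[x xS ->].
case: (fS x xS) => y -> /andP[yV _]; exact: imset_f.
Qed.


Lemma pp_ll (Pt Ln : finType) (I : Pt -> Ln -> bool) q : projective_plane I q ->
  forall p p' l l', p != p' -> I p l -> I p' l -> I p l' -> I p' l' -> l = l'.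
Proof.
case=> [H1 _] p p' l l' ne a b c d.
case/cards1P: (introT eqP (H1 p p' ne)) => x Hx.
have : l \in [set x] by rewrite -Hx inE a b.
have : l' \in [set x] by rewrite -Hx inE c d.
by rewrite !inE => /eqP -> /eqP ->.
Qed.

Lemma pp_pp (Pt Ln : finType) (I : Pt -> Ln -> bool) q : projective_plane I q ->
  forall p p' l l', l != l' -> I p l -> I p l' -> I p' l -> I p' l' -> p = p'.
Proof.
case=> [_ [H2 _]] p p' l l' ne a b c d.
case/cards1P: (introT eqP (H2 l l' ne)) => x Hx.
have : p \in [set x] by rewrite -Hx inE a b.
have : p' \in [set x] by rewrite -Hx inE c d.
by rewrite !inE => /eqP -> /eqP ->.
Qed.

Lemma pp_line (Pt Ln : finType) (I : Pt -> Ln -> bool) q : projective_plane I q ->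
  forall p p', p != p' -> exists l, I p l && I p' l.
Proof.
case=> [H1 _] p p' ne.
case/cards1P: (introT eqP (H1 p p' ne)) => x Hx.
have : x \in [set x] by rewrite inE.
by rewrite -Hx inE => H; exists x.
Qed.

Lemma pp_meet (Pt Ln : finType) (I : Pt -> Ln -> bool) q : projective_plane I q ->
  forall l l', l != l' -> exists p, I p l && I p l'.
Proof.
case=> [_ [H2 _]] l l' ne.
case/cards1P: (introT eqP (H2 l l' ne)) => x Hx.
have : x \in [set x] by rewrite inE.
by rewrite -Hx inE => H; exists x.
Qed.

Lemma pencil_card (Pt Ln : finType) (I : Pt -> Ln -> bool) q : projective_plane I q ->
  forall Q m, ~~ I Q m -> #|pencil I Q| = q.+1.
Proof.
move=> pp Q m Qm.
have [_ [_ [_ H4]]] := pp.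
apply/eqP; rewrite -(H4 m) eqn_leq; apply/andP; split.
- apply: (@inj_rel _ _ _ _ (fun l X => I X l)).
  + move=> l; rewrite inE => Ql.
    have nelm : l != m by apply: contraNneq Qm => <-.
    case: (pp_meet pp nelm) => X /andP[a b]; exists X => //; by rewrite inE.
  + move=> l l' X; rewrite !inE => a b c d e.
    apply: (pp_ll pp _ a d b e); apply: contraNneq Qm => ->; exact: c.
- apply: (@inj_rel _ _ _ _ (fun X l => I X l)).
  + move=> X; rewrite inE => Xm.
    have neXQ : X != Q by apply: contraNneq Qm => <-.
    case: (pp_line pp neXQ) => l /andP[a b]; exists l => //; by rewrite inE.
  + move=> X X' l; rewrite !inE => a b c d e.
    apply: (pp_pp pp _ a d b e); apply: contraNneq Qm => ->; exact: c.
Qed.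

Lemma card_split (Pt Ln : finType) (S : {set Pt}) (T : {set Ln}) :
  #|inl @: S :|: inr @: T| = #|S| + #|T|.
Proof.
rewrite cardsU !card_imset; try by move=> ? ? [].
suff -> : inl @: S :&: inr @: T = set0 by rewrite cards0 subn0.
apply/setP => x; rewrite !inE; apply/negP => /andP[/imsetP[a _ ->] /imsetP[b _]]. by [].
Qed.

Lemma D_split (Pt Ln : finType) (D : {set Pt + Ln}) :
  D = inl @: pts_of D :|: inr @: lns_of D.
Proof.
apply/setP => [[p|l]]; rewrite inE.
- rewrite (mem_imset _ _ (@inl_inj _ _)) inE.
  case: (boolP (_ \in inr @: _)) => [/imsetP[? _ //]|]; by rewrite orbF.
- rewrite (mem_imset _ _ (@inr_inj _ _)) inE.
  case: (boolP (_ \in inl @: _)) => [/imsetP[? _ //]|]; by [].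
Qed.

Lemma in_split_l (Pt Ln : finType) (S : {set Pt}) (T : {set Ln}) X :
  (inl X \in inl @: S :|: inr @: T) = (X \in S).
Proof.
rewrite inE (mem_imset _ _ (@inl_inj _ _)).
case: (boolP (_ \in inr @: _)) => [/imsetP[? _ //]|]; by rewrite orbF.
Qed.

Lemma in_split_r (Pt Ln : finType) (S : {set Pt}) (T : {set Ln}) X :
  (inr X \in inl @: S :|: inr @: T) = (X \in T).
Proof.
rewrite inE (mem_imset _ _ (@inr_inj _ _)).
case: (boolP (_ \in inl @: _)) => [/imsetP[? _ //]|]; by [].
Qed.

Lemma pts_split (Pt Ln : finType) (S : {set Pt}) (T : {set Ln}) :
  pts_of (inl @: S :|: inr @: T) = S.
Proof. by apply/setP => x; rewrite inE in_split_l. Qed.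

Lemma lns_split (Pt Ln : finType) (S : {set Pt}) (T : {set Ln}) :
  lns_of (inl @: S :|: inr @: T) = T.
Proof. by apply/setP => x; rewrite inE in_split_r. Qed.

Lemma elem_of (T : finType) (A : {set T}) : 0 < #|A| -> exists x, x \in A.
Proof. by move/card_gt0P. Qed.

Lemma arith1 d p l a e ls m b bq nqm mq nq mr q :
  d = p + l -> a + e <= p -> ls + m <= l -> a + b = q -> b = 1 + bq ->
  mq + nqm = nq -> mq + mr = m -> nqm <= e -> bq <= mr -> nq = q -> ls = q ->
  d < 3 * q - 1 -> False.
Proof. lia. Qed.

Unset Implicit Arguments.

Theorem lemma1 (Pt Ln : finType) (I : Pt -> Ln -> bool) (q : nat)
  (D : {set Pt + Ln}) (P : Pt) (ell : Ln) :
  projective_plane I q ->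
  minimal_dominating I D ->
  #|D| < 3 * q - 1 ->
  #|pencil I P :&: lns_of D| = q ->
  ell \in pencil I P :\: lns_of D ->
  [/\ lns_of D = pencil I P :\ ell,
      pts_of D = [set p | I p ell] :\ P,
      #|D| = 2 * q
    & stable_dominating I D].
Proof.
move=> pp [domD minD] HD Hcard Hell.
have [_ [_ [_ H4]]] := pp.
move: Hell; rewrite in_setD => /andP[ellnD ellP].
have ellnD' : inr ell \notin D by move: ellnD; rewrite inE.
have PE : I P ell by move: ellP; rewrite inE.
have q1 : 0 < q by lia.
have [l1 l1P] : exists l, l \in pencil I P :&: lns_of D by apply: elem_of; rewrite Hcard.
have l1ne : l1 != ell by apply: contraNneq ellnD => <-; move: l1P; rewrite inE => /andP[].
have Pl1 : I P l1 by move: l1P; rewrite !inE => /andP[].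
set S := [set p | I p ell] :\ P.
have cS : #|S| = q by move: (H4 ell); rewrite (cardsD1 P) inE PE /= add1n => -[].
have inS : forall X, (X \in S) = (X != P) && I X ell by move=> X; rewrite !inE.
have pcS : forall Q, Q \in S -> #|pencil I Q| = q.+1.
  move=> Q; rewrite inS => /andP[QP Qe]; apply: (@pencil_card _ _ I q pp Q l1).
  apply/negP => Ql1; move/negP: l1ne; apply; apply/eqP.
  apply: (pp_ll pp _ Pl1 Ql1 PE Qe); by rewrite eq_sym.
have [Q0 Q0S] : exists Q, Q \in S by apply: elem_of; rewrite cS.
have nQe : forall Q, Q \in S -> #|pencil I Q :\ ell| = q.
  move=> Q QS; move: (pcS Q QS); rewrite (cardsD1 ell) inE.
  by move: QS; rewrite inS => /andP[_ ->] /= [].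
have [n0 n0Q] : exists n, n \in pencil I Q0 :\ ell by apply: elem_of; rewrite nQe.
have cP : #|pencil I P| = q.+1.
  apply: (@pencil_card _ _ I q pp P n0); apply/negP => Pn0.
  move: n0Q Q0S; rewrite !inE => /andP[n0e Qn0] /andP[QP Qe].
  move/negP: n0e; apply; apply/eqP; apply: (pp_ll pp _ Pn0 Qn0 PE Qe); by rewrite eq_sym.
set Ls := pencil I P :\ ell.
have cLs : #|Ls| = q by move: cP; rewrite (cardsD1 ell) ellP /= => -[].
have EL : pencil I P :&: lns_of D = Ls.
  apply/eqP; rewrite eqEcard cLs Hcard leqnn andbT.
  apply/subsetP => l; rewrite !inE => /andP[Pl lD]; rewrite Pl andbT.
  by apply: contraNneq ellnD' => <-.
have HLs : Ls \subset lns_of D by rewrite -EL subsetIr.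
have inLs : forall l, (l \in Ls) = (l != ell) && I P l by move=> l; rewrite !inE.
have split : #|D| = #|pts_of D| + #|lns_of D| by rewrite {1}(D_split D) card_split.
have step1 : forall Q, Q \in S -> inl Q \in D.
  move=> Q QS; apply/negPn/negP => QnD.
  have QS' := QS; move: QS'; rewrite inS => /andP[QP Qe].
  set NQ := pencil I Q :\ ell.
  set MQ := NQ :&: lns_of D.
  set E := [set e | (inl e \in D) && ~~ I e ell].
  set M := lns_of D :\: pencil I P.
  set A := S :&: pts_of D.
  set B := S :\: pts_of D.
  have h1 : #|NQ :\: lns_of D| <= #|E|.
    apply: (@inj_rel _ _ _ _ (fun n e => I e n)).
    - move=> n; rewrite !inE => /andP[nnD /andP[ne Qn]].
      case: (domD (inr n) nnD) => [[e|l]] eD //= en.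
      exists e => //; rewrite inE eD /=; apply/negP => ee.
      have eQ : e = Q by apply: (pp_pp pp ne en ee Qn Qe).
      by move: QnD; rewrite -eQ eD.
    - move=> n n' e; rewrite !inE => /andP[_ /andP[_ Qn]] /andP[_ /andP[_ Qn']] /andP[eD ee] en en'.
      apply: (pp_ll pp _ en Qn en' Qn'); by apply: contraNneq ee => ->.
  have h2 : #|B :\ Q| <= #|M :\: MQ|.
    apply: (@inj_rel _ _ _ _ (fun X m => I X m)).
    - move=> X; rewrite !inE => /andP[XQ /andP[XnD /andP[XP Xe]]].
      case: (domD (inl X) XnD) => [[e|m]] mD //= Xm.
      exists m => //.
      have me : m != ell by apply: contraNneq ellnD' => <-.
      have nPm : ~~ I P m.
        apply/negP => Pm; move/negP: me; apply; apply/eqP.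
        apply: (pp_ll pp _ Pm Xm PE Xe); by rewrite eq_sym.
      have nQm : ~~ I Q m.
        apply/negP => Qm; move/negP: me; apply; apply/eqP.
        apply: (pp_ll pp _ Qm Xm Qe Xe); by rewrite eq_sym.
      by rewrite !inE mD me (negbTE nPm) (negbTE nQm).
    - move=> X X' m; rewrite !inE => /andP[_ /andP[_ /andP[_ Xe]]] /andP[_ /andP[_ /andP[_ Xe']]] /andP[_ /andP[_ mD]] Xm Xm'.
      have me : m != ell by apply: contraNneq ellnD' => <-.
      exact: (pp_pp pp me Xm Xe Xm' Xe').
  have h3 : MQ \subset M.
    apply/subsetP => n; rewrite !inE => /andP[/andP[ne Qn] nD]; rewrite nD andbT.
    apply/negP => Pn; move/negP: ne; apply; apply/eqP.
    apply: (pp_ll pp _ Pn Qn PE Qe); by rewrite eq_sym.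
  have cAB : #|A| + #|B| = q by rewrite cardsID.
  have QB : Q \in B by rewrite in_setD QS inE QnD.
  have cB := cardsD1 Q B; rewrite QB in cB.
  have cNQ := cardsID (lns_of D) NQ.
  have cNQ' : #|NQ :&: lns_of D| = #|MQ| by [].
  have cM := cardsID MQ M; rewrite (setIidPr h3) in cM.
  have cpts : #|A| + #|E| <= #|pts_of D|.
    have -> : #|A| + #|E| = #|A :|: E|.
      rewrite cardsU; suff -> : A :&: E = set0 by rewrite cards0 subn0.
      apply/setP => x; rewrite !inE; apply/negP => /andP[/andP[/andP[_ xe] _] /andP[_ nxe]].
      by rewrite xe in nxe.
    apply: subset_leq_card; apply/subsetP => x; rewrite !inE => /orP[/andP[_ ->]|/andP[->]] //.
  have clns : #|Ls| + #|M| <= #|lns_of D|.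
    have -> : #|Ls| + #|M| = #|Ls :|: M|.
      rewrite cardsU; suff -> : Ls :&: M = set0 by rewrite cards0 subn0.
      apply/setP => x; rewrite !inE; apply/negP => /andP[/andP[_ xe] /andP[nxe _]].
      by rewrite xe in nxe.
    apply: subset_leq_card; apply/subsetP => x; rewrite in_setU => /orP[xL|].
      by apply: (subsetP HLs).
    by rewrite in_setD => /andP[_ ->].
  have := nQe Q QS.
  rewrite -/NQ in cNQ *.
  move=> cNQq.
  exact: (arith1 split cpts clns cAB cB cNQ cM h1 h2 cNQq cLs HD).
have l1Ls : l1 \in Ls by rewrite -EL.
set D0 := inl @: S :|: inr @: Ls.
have D0sub : D0 \subset D.
  apply/subsetP => -[X|l]; rewrite ?in_split_l ?in_split_r.
    exact: step1.
  by move=> lL; move: (subsetP HLs l lL); rewrite inE.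
have D0dom : dominating I D0.
  move=> [X|n]; rewrite ?in_split_l ?in_split_r => nin.
  - case: (eqVneq X P) => [->|XP].
      by exists (inr l1); rewrite ?in_split_r //=.
    have nXe : ~~ I X ell by move: nin; rewrite inS XP.
    case: (pp_line pp XP) => l /andP[Xl Pl].
    have le : l != ell by apply: contraNneq nXe => <-.
    by exists (inr l); rewrite ?in_split_r ?inLs ?le //=.
  - case: (boolP (I P n)) => Pn.
      have ne : n = ell by apply/eqP; move: nin; rewrite inLs Pn andbT negbK.
      exists (inl Q0); rewrite ?in_split_l //= ne.
      by move: Q0S; rewrite inS => /andP[].
    have ne : n != ell by apply: contraNneq Pn => ->.
    case: (pp_meet pp ne) => X /andP[Xn Xe].
    have XP : X != P by apply: contraNneq Pn => <-.
    by exists (inl X); rewrite ?in_split_l ?inS ?XP ?Xe //=.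
have D0D : D0 = D.
  apply/eqP; apply/negPn/negP => ne; apply: (minD D0) => //.
  by rewrite properEneq ne D0sub.
rewrite -D0D pts_split lns_split card_split cS cLs.
have qq : 2 <= q by move: HD; rewrite -D0D card_split cS cLs; lia.
split => //; first lia.
split; first by rewrite D0D.
move=> [D' [sub cD' domD' [D'' [sub'' dom'' c'']]]].
have [w Hw] : exists w, D' :\: D0 = [set w].
  apply/cards1P; have := cardsID D0 D'; rewrite (setIidPr sub) cD' => h.
  by apply/eqP; move: h; rewrite -[#|D0|.+1]addn1 => /addnI.
have wnD : w \notin D0.
  have : w \in D' :\: D0 by rewrite Hw inE.
  by rewrite in_setD => /andP[].
have inD'' : forall x, x \in D'' -> x \in D0 \/ x = w.
  move=> x /(subsetP sub'') xD'; case: (boolP (x \in D0)) => xD; [by left|right].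
  have : x \in D' :\: D0 by rewrite in_setD xD xD'.
  by rewrite Hw inE => /eqP.
case: (boolP (Ls \subset lns_of D'')) => HL; last first.
  case/subsetPn: HL => l lL; rewrite inE => lnD''.
  have Pl : I P l by move: lL; rewrite inLs => /andP[].
  have le : l != ell by move: lL; rewrite inLs => /andP[].
  have : 1 < #|[set p | I p l] :\ P|.
    by move: (H4 l); rewrite (cardsD1 P) inE Pl /= add1n => -[->].
  case/card_gt1P => X1 [X2 [X1T X2T ne12]].
  have key : forall X, X \in [set p | I p l] :\ P ->
      exists2 u, u \in D'' & (u = inl X \/ inc_adj I u (inl X)) /\ u = w.
    move=> X; rewrite !inE => /andP[XP Xl].
    have Xne : ~~ I X ell.
      apply/negP => Xe; move/negP: le; apply; apply/eqP.
      apply: (pp_ll pp _ Pl Xl PE Xe); by rewrite eq_sym.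
    have [u uD hu] : exists2 u, u \in D'' & (u = inl X \/ inc_adj I u (inl X)).
      case: (boolP (inl X \in D'')) => h; first by exists (inl X); auto.
      by case: (dom'' _ h) => u ? ?; exists u; auto.
    exists u => //; split => //.
    case: (inD'' u uD) => // uD0; exfalso.
    case: hu => [ue|].
      by move: uD0; rewrite ue in_split_l inS XP (negbTE Xne).
    move: uD uD0; case: u => [Y|n] //= uD; rewrite in_split_r inLs => /andP[ne Pn] Xn.
    have nl : n = l by apply: (pp_ll pp _ Pn Xn Pl Xl); rewrite eq_sym.
    by move: lnD''; rewrite -nl uD.
  case: (key X1 X1T) => u1 u1D [h1 e1]; case: (key X2 X2T) => u2 u2D [h2 e2].
  subst u1 u2.
  move: X1T X2T; rewrite !inE => /andP[_ X1l] /andP[_ X2l].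
  destruct w as [Y|n].
    case: h1 => [[e1]|//]; case: h2 => [[e2]|//].
    by move: ne12; rewrite -e1 -e2 eqxx.
  case: h1 => [//|/= X1n]; case: h2 => [//|/= X2n].
  have nl : n != l by apply: contraNneq lnD'' => <-.
  by move: ne12; rewrite (pp_pp pp nl X1n X1l X2n X2l) eqxx.
have dQ : forall Q, Q \in S -> inl Q \notin D'' ->
    exists n, [/\ w = inr n, I Q n & w \in D''].
  move=> Q QS Qn; have := QS; rewrite inS => /andP[QP Qe].
  case: (dom'' _ Qn) => u uD adj; case: (inD'' u uD) => [uD0|uw].
    move: uD0 adj; case: u {uD} => [Y|n] //=; rewrite in_split_r inLs => /andP[ne Pn] Qn'.
    by move/negP: ne; case; apply/eqP; apply: (pp_ll pp _ Pn Qn' PE Qe); rewrite eq_sym.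
  subst u; move: adj uD; case: w {Hw wnD inD''} => [Y|n] //= Qn' wD.
  by exists n.
have [Q1 Q1S Q1n] : exists2 Q, Q \in S & inl Q \notin D''.
  case: (boolP (S \subset pts_of D'')) => HS; last first.
    by case/subsetPn: HS => Q ? ; rewrite inE => ?; exists Q.
  have : D0 \subset D''.
    apply/subsetP => -[X|l]; rewrite ?in_split_l ?in_split_r => h.
      by move: (subsetP HS X h); rewrite inE.
    by move: (subsetP HL l h); rewrite inE.
  by move/subset_leq_card; rewrite leqNgt c''.
case: (dQ Q1 Q1S Q1n) => n [wn Q1n' wD''].
case: (boolP (S :\ Q1 \subset pts_of D'')) => HS2.
  have : w |: (D0 :\ inl Q1) \subset D''.
    apply/subsetP => x; rewrite in_setU1 => /orP[/eqP->//|]; rewrite in_setD1 => /andP[xne].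
    case: x xne => [X|l] xne; rewrite ?in_split_l ?in_split_r => h.
      have : X \in S :\ Q1 by rewrite in_setD1 h andbT; apply: contraNneq xne => ->.
      by move/(subsetP HS2); rewrite inE.
    by move: (subsetP HL l h); rewrite inE.
  move/subset_leq_card; rewrite cardsU1 in_setD1 (negbTE wnD) andbF /=.
  have := cardsD1 (inl Q1) D0; rewrite in_split_l Q1S => <-.
  by rewrite leqNgt c''.
case/subsetPn: HS2 => Q2; rewrite in_setD1 => /andP[Q21 Q2S]; rewrite inE => Q2n.
case: (dQ Q2 Q2S Q2n) => n2 [wn2 Q2n2 _].
move: wn2; rewrite wn => -[e2]; subst n2.
have Q1e : I Q1 ell by move: Q1S; rewrite inS => /andP[].
have Q2e : I Q2 ell by move: Q2S; rewrite inS => /andP[].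
have Q1P : Q1 != P by move: Q1S; rewrite inS => /andP[].
have nell : n = ell by apply: (pp_ll pp Q21 Q2n2 Q1n' Q2e Q1e).
subst n.
have [n' n'Q] : exists n, n \in pencil I Q1 :\ ell by apply: elem_of; rewrite nQe.
move: n'Q; rewrite !inE => /andP[n'e Q1n'2].
have nPn' : ~~ I P n'.
  apply/negP => Pn'; move/negP: n'e; apply; apply/eqP.
  by apply: (pp_ll pp _ Pn' Q1n'2 PE Q1e); rewrite eq_sym.
have n'nD : inr n' \notin D''.
  apply/negP => h; case: (inD'' _ h) => [|].
    by rewrite in_split_r inLs (negbTE nPn') andbF.
  by rewrite wn => -[e]; move: n'e; rewrite e eqxx.
case: (dom'' _ n'nD) => u uD adj; case: (inD'' u uD) => [uD0|uw]; last first.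
  by move: adj; rewrite uw wn.
move: uD uD0 adj; case: u => [Y|l] //= uD; rewrite in_split_l inS => /andP[_ Ye] Yn'.
have YQ : Y = Q1 by apply: (pp_pp pp n'e Yn' Ye Q1n'2 Q1e).
by move: Q1n; rewrite -YQ uD.
Qed.
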